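(* Let $\mathcal{S}_m\subset\mathcal{S}_n\subset\mathcal{T}$ be nested subsets of the training set with $|\mathcal{S}_m|=m<n=|\mathcal{S}_n|$, let $L_m,L_n$ be the corresponding empirical losses and $R_m,R_n$ the corresponding regularized empirical risks, with minimizers $\mathbf{w}_m^*,\mathbf{w}_n^*$. Let $\mathbf{w}_m$ be a (possibly random) vector such that $\mathbb{E}[R_m(\mathbf{w}_m)-R_m(\mathbf{w}_m^* )]\le \delta_m$. Then $$\mathbb{E}[R_n(\mathbf{w}_m)-R_n(\mathbf{w}_n^* )]\le \delta_m+\frac{2(n-m)}{n}\left(V_{n-m}+V_m\right)+2\left(V_m-V_n\right)+\frac{c(V_m-V_n)}{2}\|\mathbf{w}^*\|^2 .$$
   Context: Let $Z$ be a random variable with distribution $P$ on a space $\mathcal{Z}$ and $f:\mathbb{R}^p\times\mathcal{Z}\to\mathbb{R}$ a loss function. The expected loss is $L(\mathbf{w})=\mathbb{E}_Z[f(\mathbf{w},Z)]$ and $\mathbf{w}^*$ denotes a minimizer of $L$. The training set $\mathcal{T}=\{z_1,\dots,z_N\}$ consists of $N$ independent samples from $P$. For a (fixed, data-independent) subset $\mathcal{S}\subseteq\mathcal{T}$ with $k$ elements, the empirical loss is $L_{\mathcal{S}}(\mathbf{w})=\frac1k\sum_{z\in\mathcal{S}}f(\mathbf{w},z)$; for the sets $\mathcal{S}_k$ we write $L_k=L_{\mathcal{S}_k}$. Standing assumption: there are positive constants $V_k$ ($k\ge1$), nonincreasing in $k$, such that for every $k$ and every set $\mathcal{S}$ of $k$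 independent samples from $P$, $\mathbb{E}[\sup_{\mathbf{w}\in\mathbb{R}^p}|L(\mathbf{w})-L_{\mathcal{S}}(\mathbf{w})|]\le V_k$, where the expectation is over the samples. For a constant $c>0$ the regularized empirical risk is $R_k(\mathbf{w})=L_k(\mathbf{w})+\frac{cV_k}{2}\|\mathbf{w}\|^2$, with minimizer $\mathbf{w}_k^*$. Assumption: for every $z$, $f(\cdot,z)$ is convex and its gradient is $M$-Lipschitz continuous. Expectations in the claim are over the choice of the training samples (and any randomness in $\mathbf{w}_m$). *)

(* Defs.v *)
From HB Require Import structures.
From mathcomp Require Import all_boot all_order all_algebra.
From mathcomp Require Import all_classical all_reals all_analysis.
From mathcomp Require Import measurable_realfun.
Set Implicit Arguments. Unset Strict Implicit. Unset Printing Implicit Defensive.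
Import Order.TTheory GRing.Theory Num.Theory.
Import numFieldNormedType.Exports.
Local Open Scope classical_set_scope.
Local Open Scope ring_scope.

Section Defs.
Variable R : realType.

Definition dotv (p : nat) (u v : 'rV[R]_p) : R := \sum_(i < p) u 0 i * v 0 i.
Definition sqnorm (p : nat) (w : 'rV[R]_p) : R := dotv w w.
Definition norm2 (p : nat) (w : 'rV[R]_p) : R := Num.sqrt (sqnorm w).

Definition convex_fun (p : nat) (F : 'rV[R]_p -> R) : Prop :=
  forall (u v : 'rV[R]_p) (t : R), 0 <= t <= 1 ->
    F (t *: u + (1 - t) *: v) <= t * F u + (1 - t) * F v.

(* F is differentiable with gradient g (every directional derivative of F at w
   in direction v exists and equals <g w, v>), and g is M-Lipschitz for the
   Euclidean norm. *)
Definition lipschitz_gradient (p : nat) (M : R) (F : 'rV[R]_p -> R) : Prop :=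
  exists g : 'rV[R]_p -> 'rV[R]_p,
    (forall w v : 'rV[R]_p, is_derive w v F (dotv (g w) v)) /\
    (forall u v : 'rV[R]_p, norm2 (g u - g v) <= M * norm2 (u - v)).

Definition expect d (Omega : measurableType d) (P : probability Omega R)
  (X : Omega -> R) : \bar R := (\int[P]_om (X om)%:E)%E.

Definition has_distribution d (Omega : measurableType d) dZ (Z : measurableType dZ)
  (P : probability Omega R) (mu : probability Z R) (X : Omega -> Z) : Prop :=
  measurable_fun setT X /\
  forall A : set Z, measurable A -> P (X @^-1` A) = mu A.

Definition mutually_independent d (Omega : measurableType d) dZ (Z : measurableType dZ)
  (P : probability Omega R) (I : finType) (X : I -> Omega -> Z) : Prop :=
  forall (J : {set I}) (A : I -> set Z), (forall i, measurable (A i)) ->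
    P (\bigcap_(i in [set j | j \in J]) (X i @^-1` A i)) =
    (\prod_(i in J) P (X i @^-1` A i))%E.

Definition exp_loss dZ (Z : measurableType dZ) (mu : probability Z R) (p : nat)
  (f : 'rV[R]_p -> Z -> R) (w : 'rV[R]_p) : R :=
  fine (\int[mu]_x (f w x)%:E)%E.

Definition emp_loss dZ (Z : measurableType dZ) (p k : nat)
  (f : 'rV[R]_p -> Z -> R) (y : 'I_k -> Z) (w : 'rV[R]_p) : R :=
  k%:R^-1 * \sum_(i < k) f w (y i).

Definition emp_loss_set dZ (Z : measurableType dZ) (p N : nat)
  (f : 'rV[R]_p -> Z -> R) (z : 'I_N -> Z) (S : {set 'I_N}) (w : 'rV[R]_p) : R :=
  (#|S|%:R)^-1 * \sum_(i in S) f w (z i).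

Definition reg_risk dZ (Z : measurableType dZ) (p N : nat)
  (f : 'rV[R]_p -> Z -> R) (V : nat -> R) (c : R)
  (z : 'I_N -> Z) (S : {set 'I_N}) (w : 'rV[R]_p) : R :=
  emp_loss_set f z S w + c * V #|S| / 2 * sqnorm w.

Definition unif_dev dZ (Z : measurableType dZ) (mu : probability Z R) (p k : nat)
  (f : 'rV[R]_p -> Z -> R) (y : 'I_k -> Z) : \bar R :=
  ereal_sup (range (fun w : 'rV[R]_p => (`| exp_loss mu f w - emp_loss f y w |)%:E)).

End Defs.

(* Main.v *)
Require Import Defs.
From HB Require Import structures.
From mathcomp Require Import all_boot all_order all_algebra.
From mathcomp Require Import all_classical all_reals all_analysis.
From mathcomp Require Import measurable_realfun.
Import Order.TTheory GRing.Theory Num.Theory.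
Import numFieldNormedType.Exports.
Local Open Scope classical_set_scope.
Local Open Scope ring_scope.

Lemma emp_enum (R : realType) dZ (Z : measurableType dZ) (p N : nat)
  (f : 'rV[R]_p -> Z -> R) (z : 'I_N -> Z) (S : {set 'I_N}) w :
  emp_loss f (fun i : 'I_#|S| => z (enum_val i)) w = emp_loss_set f z S w.
Proof. by rewrite /emp_loss /emp_loss_set (big_enum_val (A:=mem S)). Qed.

Lemma dev_enum (R : realType) dZ (Z : measurableType dZ) (mu : probability Z R) (p N : nat)
  (f : 'rV[R]_p -> Z -> R) (z : 'I_N -> Z) (S : {set 'I_N}) w :
  ((`| exp_loss mu f w - emp_loss_set f z S w |)%:E <=
    unif_dev mu f (fun i : 'I_#|S| => z (enum_val i)))%E.
Proof.
rewrite /unif_dev -emp_enum.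
by apply: ereal_sup_ubound; exists w.
Qed.

Lemma indep_enum (R : realType) d (Omega : measurableType d) (P : probability Omega R)
  dZ (Z : measurableType dZ) (N : nat) (z : 'I_N -> Omega -> Z) (S : {set 'I_N}) :
  mutually_independent P z ->
  mutually_independent P (fun i : 'I_#|S| => z (enum_val i)).
Proof.
move=> hz J A mA.
pose A' := fun j : 'I_N => if [pick i : 'I_#|S| | enum_val i == j] is Some i then A i else setT.
have A'E : forall i : 'I_#|S|, A' (enum_val i) = A i.
  move=> i; rewrite /A'; case: pickP => [i' /eqP/enum_val_inj -> //|/(_ i)].
  by rewrite eqxx.
have mA' : forall j, measurable (A' j).
  by move=> j; rewrite /A'; case: pickP => [i _|_]; [exact: mA | exact: measurableT].
have := hz [set enum_val i | i in J]%SET A' mA'.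
rewrite big_imset /=; last by move=> i1 i2 _ _; exact: enum_val_inj.
under [X in _ = X -> _]eq_bigr do rewrite A'E.
move=> <-; congr (P _).
apply/seteqP; split=> om /= H.
- move=> j /= /imsetP [i iJ ->]; rewrite A'E; exact: (H i).
- move=> i /= iJ; rewrite -A'E; apply: H => /=; apply/imsetP; by exists i.
Qed.
From mathcomp Require Import ring lra.
Lemma key_real (R : realType) (c Vm Vn n m : R)
  (Lm_wm Ld_wm Ln_wm Lm_wn Ld_wn Ln_wn Ln_ws L_wm L_wn L_ws Lm_wms s_wm s_wn s_ws s_wms : R) :
 0 < c -> 0 < Vn -> Vn <= Vm -> 0 < m -> m < n -> 0 <= s_wm ->
 n * Ln_wm = m * Lm_wm + (n-m) * Ld_wm ->
 n * Ln_wn = m * Lm_wn + (n-m) * Ld_wn ->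
 Lm_wms + c*Vm/2*s_wms <= Lm_wn + c*Vm/2*s_wn ->
 Ln_wn + c*Vn/2*s_wn <= Ln_ws + c*Vn/2*s_ws ->
 L_ws <= L_wn ->
 (Ln_wm + c*Vn/2*s_wm) - (Ln_wn + c*Vn/2*s_wn) <=
 ((Lm_wm + c*Vm/2*s_wm) - (Lm_wms + c*Vm/2*s_wms))
 + ((n-m)/n* `|L_wm - Ld_wm| + (n-m)/n* `|L_wn - Ld_wn|)
 + ((n-m)/n* `|L_wm - Lm_wm| + (n-m)/n* `|L_wn - Lm_wn|)
 + ((Vm-Vn)/Vn* `|L_wn - Ln_wn| + (Vm-Vn)/Vn* `|L_ws - Ln_ws|)
 + c*(Vm-Vn)/2*s_ws.
Proof.
move=> c0 Vn0 VnVm m0 mn s0 En1 En2 Hm Hn Hs.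
have n0 : 0 < n by lra.
have a0 : 0 <= (n-m)/n by apply: divr_ge0; lra.
have e0 : 0 <= (Vm-Vn)/Vn by apply: divr_ge0; lra.
have E1 : Ln_wm - Lm_wm = (n-m)/n * (Ld_wm - Lm_wm).
  apply: (mulfI (lt0r_neq0 n0)); rewrite mulrA mulrCA divff ?lt0r_neq0 // mulr1 mulrBr En1; ring.
have E2 : Lm_wn - Ln_wn = (n-m)/n * (Lm_wn - Ld_wn).
  apply: (mulfI (lt0r_neq0 n0)); rewrite mulrA mulrCA divff ?lt0r_neq0 // mulr1 mulrBr En2; ring.
have B1 : (n-m)/n * (Ld_wm - Lm_wm) <= (n-m)/n* `|L_wm - Ld_wm| + (n-m)/n* `|L_wm - Lm_wm|.
  rewrite -mulrDr; apply: ler_wpM2l => //.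
  have := ler_norm (L_wm - Ld_wm); have := ler_norm (- (L_wm - Ld_wm)); rewrite normrN.
  have := ler_norm (L_wm - Lm_wm); have := ler_norm (- (L_wm - Lm_wm)); rewrite normrN.
  lra.
have B2 : (n-m)/n * (Lm_wn - Ld_wn) <= (n-m)/n* `|L_wn - Ld_wn| + (n-m)/n* `|L_wn - Lm_wn|.
  rewrite -mulrDr; apply: ler_wpM2l => //.
  have := ler_norm (L_wn - Ld_wn); have := ler_norm (- (L_wn - Ld_wn)); rewrite normrN.
  have := ler_norm (L_wn - Lm_wn); have := ler_norm (- (L_wn - Lm_wn)); rewrite normrN.
  lra.
have E3 : c*(Vm-Vn)/2*s_wn = (Vm-Vn)/Vn * (c*Vn/2*s_wn).
  field; lra.
have E4 : c*(Vm-Vn)/2*s_ws = (Vm-Vn)/Vn * (c*Vn/2*s_ws).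
  field; lra.
have B3 : (Vm-Vn)/Vn * (c*Vn/2*s_wn) <= (Vm-Vn)/Vn * (c*Vn/2*s_ws)
   + ((Vm-Vn)/Vn* `|L_wn - Ln_wn| + (Vm-Vn)/Vn* `|L_ws - Ln_ws|).
  rewrite -!mulrDr; apply: ler_wpM2l => //.
  have := ler_norm (L_wn - Ln_wn); have := ler_norm (- (L_wn - Ln_wn)); rewrite normrN.
  have := ler_norm (L_ws - Ln_ws); have := ler_norm (- (L_ws - Ln_ws)); rewrite normrN.
  lra.
have B4 : c*(Vn-Vm)/2*s_wm <= 0.
  rewrite mulr_le0_ge0 //; rewrite -mulrA mulr_ge0_le0 //; first lra.
  rewrite mulr_le0_ge0 //; lra.
have E5 : c*(Vn-Vm)/2*s_wm = c*Vn/2*s_wm - c*Vm/2*s_wm by ring.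
have E6 : c*(Vm-Vn)/2*s_wn = c*Vm/2*s_wn - c*Vn/2*s_wn by ring.
lra.
Qed.

Lemma comb (R : realType) (a x y : R) (D : \bar R) : 0 <= a ->
  (x%:E <= D)%E -> (y%:E <= D)%E -> ((a*x + a*y)%:E <= (2*a)%:E * D)%E.
Proof.
move=> a0; case: D => [r| |] //.
- rewrite -EFinM !lee_fin => hx hy.
  have := ler_wpM2l a0 hx; have := ler_wpM2l a0 hy; lra.
- move=> _ _; have [->|an0] := eqVneq a 0.
    by rewrite !mul0r mulr0 add0r mul0e.
  rewrite gt0_muley ?leey // lte_fin; have : 0 < a by rewrite lt_def an0 a0.
  lra.
Qed.

Lemma dev_ge0 (R : realType) dZ (Z : measurableType dZ) (mu : probability Z R) (p N : nat)
  (f : 'rV[R]_p -> Z -> R) (z : 'I_N -> Z) (S : {set 'I_N}) :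
  (0 <= unif_dev mu f (fun i : 'I_#|S| => z (enum_val i)))%E.
Proof.
apply: (le_trans _ (dev_enum _ _ _ mu _ _ f z S 0)); by rewrite lee_fin.
Qed.

Lemma sqnorm_ge0 (R : realType) (p : nat) (w : 'rV[R]_p) : 0 <= sqnorm w.
Proof. rewrite /sqnorm /dotv; apply: sumr_ge0 => i _; by rewrite -expr2 sqr_ge0. Qed.

Theorem proposition1
  (R : realType)
  (d : measure_display) (Omega : measurableType d) (P : probability Omega R)
  (dZ : measure_display) (Z : measurableType dZ) (mu : probability Z R)
  (p : nat) (f : 'rV[R]_p -> Z -> R) (M : R)
  (V : nat -> R) (c : R) (N : nat) (z : 'I_N -> Omega -> Z)
  (wstar : 'rV[R]_p)
  (Sm Sn : {set 'I_N}) (m n : nat)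
  (wm wmstar wnstar : Omega -> 'rV[R]_p) (delta_m : R)
  (hf_meas : forall w, measurable_fun setT (f w))
  (hf_int : forall w, mu.-integrable setT (fun x => (f w x)%:E))
  (hf_convex : forall x, convex_fun (fun w => f w x))
  (hf_grad : forall x, lipschitz_gradient M (fun w => f w x))
  (hwstar : forall w, exp_loss mu f wstar <= exp_loss mu f w)
  (hV_pos : forall k, (0 < k)%N -> 0 < V k)
  (hV_noninc : forall k l, (0 < k)%N -> (k <= l)%N -> V l <= V k)
  (hV : forall (k : nat) (y : 'I_k -> Omega -> Z), (0 < k)%N ->
        (forall i, has_distribution P mu (y i)) -> mutually_independent P y ->
        measurable_fun setT ((fun om => unif_dev mu f (fun i => y i om)) : Omega -> \bar R) /\
        (\int[P]_om unif_dev mu f (fun i => y i om) <= (V k)%:E)%E)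
  (hc : 0 < c)
  (hz_dist : forall i, has_distribution P mu (z i))
  (hz_indep : mutually_independent P z)
  (hSmSn : Sm \subset Sn) (hm : #|Sm| = m) (hn : #|Sn| = n)
  (hm0 : (0 < m)%N) (hmn : (m < n)%N)
  (hwmstar : forall om w, reg_risk f V c (fun i => z i om) Sm (wmstar om)
                          <= reg_risk f V c (fun i => z i om) Sm w)
  (hwnstar : forall om w, reg_risk f V c (fun i => z i om) Sn (wnstar om)
                          <= reg_risk f V c (fun i => z i om) Sn w)
  (hmeas_m : measurable_fun setT (fun om =>
      reg_risk f V c (fun i => z i om) Sm (wm om)
      - reg_risk f V c (fun i => z i om) Sm (wmstar om)))
  (hmeas_n : measurable_fun setT (fun om =>
      reg_risk f V c (fun i => z i om) Sn (wm om)
      - reg_risk f V c (fun i => z i om) Sn (wnstar om)))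
  (hdelta : (expect P (fun om =>
      (reg_risk f V c (fun i => z i om) Sm (wm om)
      - reg_risk f V c (fun i => z i om) Sm (wmstar om))%R) <= delta_m%:E)%E) :
  (expect P (fun om =>
      (reg_risk f V c (fun i => z i om) Sn (wm om)
      - reg_risk f V c (fun i => z i om) Sn (wnstar om))%R)
   <= (delta_m + 2 * (n - m)%N%:R / n%:R * (V (n - m)%N + V m)
       + 2 * (V m - V n) + c * (V m - V n) / 2 * sqnorm wstar)%R%:E)%E.
Proof.
set Sd := Sn :\: Sm.
have SnSm : Sn :&: Sm = Sm.
  apply/setP => i; rewrite inE; case: (boolP (i \in Sm)) => [/(fintype.subsetP hSmSn) -> //|].
  by rewrite andbF.
have n0 : (0 < n)%N by apply: ltn_trans hmn.
have hd : #|Sd| = (n - m)%N by rewrite /Sd cardsD SnSm hm hn.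
pose D (S : {set 'I_N}) om := unif_dev mu f (fun i : 'I_#|S| => z (enum_val i) om).
have hVS : forall S : {set 'I_N}, (0 < #|S|)%N ->
   measurable_fun setT (D S) /\ (\int[P]_om D S om <= (V #|S|)%:E)%E.
  move=> S S0.
  exact: (hV #|S| (fun i => z (enum_val i)) S0 (fun i => hz_dist _)
            (indep_enum _ _ _ P _ _ _ z S hz_indep)).
have [mDd iDd] := hVS Sd ltac:(rewrite hd subn_gt0; done).
have [mDm iDm] := hVS Sm ltac:(rewrite hm; done).
have [mDn iDn] := hVS Sn ltac:(rewrite hn; done).
rewrite hd in iDd; rewrite hm in iDm; rewrite hn in iDn.
have Vn0 : 0 < V n := hV_pos n n0.
have VnVm : V n <= V m := hV_noninc m n hm0 (ltnW hmn).
pose a : R := (n - m)%N%:R / n%:R.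
pose e : R := (V m - V n) / V n.
pose K : R := c * (V m - V n) / 2 * sqnorm wstar.
have a0 : 0 <= a by apply: divr_ge0; apply: ler0n.
have e0 : 0 <= e by apply: divr_ge0; [rewrite subr_ge0 | apply: ltW].
have K0 : 0 <= K.
  apply: mulr_ge0; last exact: sqnorm_ge0.
  apply: divr_ge0 => //; apply: mulr_ge0; [exact: ltW | by rewrite subr_ge0].
pose Xm om := reg_risk f V c (fun i => z i om) Sm (wm om)
              - reg_risk f V c (fun i => z i om) Sm (wmstar om).
pose g1 om := (Xm om)%:E.
pose g2 om := ((2*a)%:E * D Sd om)%E.
pose g3 om := ((2*a)%:E * D Sm om)%E.
pose g4 om := ((2*e)%:E * D Sn om)%E.
pose g5 (om : Omega) := (K%:E : \bar R).
have pw : forall om, ((reg_risk f V c (fun i => z i om) Sn (wm om)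
      - reg_risk f V c (fun i => z i om) Sn (wnstar om))%:E
      <= g1 om + g2 om + g3 om + g4 om + g5 om)%E.
  move=> om.
  set zo := fun i => z i om.
  have split : forall w, n%:R * emp_loss_set f zo Sn w
      = m%:R * emp_loss_set f zo Sm w + (n%:R - m%:R) * emp_loss_set f zo Sd w.
    move=> w; rewrite -natrB ?(ltnW hmn) //.
    rewrite /emp_loss_set hn hm hd !mulrA !mulfV ?pnatr_eq0 -?lt0n ?subn_gt0 // !mul1r.
    by rewrite [in LHS](big_setID Sm) SnSm.
  have Hm := hwmstar om (wnstar om); rewrite /reg_risk hm in Hm.
  have Hn := hwnstar om wstar; rewrite /reg_risk hn in Hn.
  have H := key_real R c (V m) (V n) n%:R m%:R
    (emp_loss_set f zo Sm (wm om)) (emp_loss_set f zo Sd (wm om)) (emp_loss_set f zo Sn (wm om))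
    (emp_loss_set f zo Sm (wnstar om)) (emp_loss_set f zo Sd (wnstar om)) (emp_loss_set f zo Sn (wnstar om))
    (emp_loss_set f zo Sn wstar) (exp_loss mu f (wm om)) (exp_loss mu f (wnstar om)) (exp_loss mu f wstar)
    (emp_loss_set f zo Sm (wmstar om)) (sqnorm (wm om)) (sqnorm (wnstar om)) (sqnorm wstar) (sqnorm (wmstar om))
    hc Vn0 VnVm ltac:(by rewrite ltr0n) ltac:(by rewrite ltr_nat) (sqnorm_ge0 _ _ _) (split _) (split _) Hm Hn (hwstar _).
  rewrite -natrB ?(ltnW hmn) // in H.
  move: H; rewrite -lee_fin => /le_trans; rewrite /g1 /g2 /g3 /g4 /g5 /Xm /reg_risk hm hn; apply.
  rewrite !EFinD; apply: leeD => //.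
  apply: leeD; first apply: leeD; first apply: leeD => //.
  - by apply: comb => //; exact: (dev_enum _ _ _ mu _ _ f zo Sd _).
  - by apply: comb => //; exact: (dev_enum _ _ _ mu _ _ f zo Sm _).
  - by apply: comb => //; exact: (dev_enum _ _ _ mu _ _ f zo Sn _).
have D0 : forall S om, (0 <= D S om)%E.
  by move=> S om; exact: (dev_ge0 _ _ _ mu _ _ f (fun i => z i om) S).
have g1_0 : forall om, (0 <= g1 om)%E.
  by move=> om; rewrite /g1 /Xm lee_fin subr_ge0; exact: hwmstar.
have g2_0 : forall om, (0 <= g2 om)%E.
  by move=> om; apply: mule_ge0 => //; rewrite lee_fin mulr_ge0.
have g3_0 : forall om, (0 <= g3 om)%E.
  by move=> om; apply: mule_ge0 => //; rewrite lee_fin mulr_ge0.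
have g4_0 : forall om, (0 <= g4 om)%E.
  by move=> om; apply: mule_ge0 => //; rewrite lee_fin mulr_ge0.
have g5_0 : forall om, (0 <= g5 om)%E by move=> om; rewrite lee_fin.
have mg1 : measurable_fun setT g1 by apply/measurable_EFinP; exact: hmeas_m.
have mg2 : measurable_fun setT g2 by exact: measurable_funeM.
have mg3 : measurable_fun setT g3 by exact: measurable_funeM.
have mg4 : measurable_fun setT g4 by exact: measurable_funeM.
have mg5 : measurable_fun setT g5 by exact: measurable_cst.
have m12 : measurable_fun setT (fun om => g1 om + g2 om)%E by exact: emeasurable_funD.
have m123 : measurable_fun setT (fun om => g1 om + g2 om + g3 om)%E by exact: emeasurable_funD.
have m1234 : measurable_fun setT (fun om => g1 om + g2 om + g3 om + g4 om)%E by exact: emeasurable_funD.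
have m12345 : measurable_fun setT (fun om => g1 om + g2 om + g3 om + g4 om + g5 om)%E by exact: emeasurable_funD.
have s12 : forall om, (0 <= g1 om + g2 om)%E by move=> om; apply: adde_ge0.
have s123 : forall om, (0 <= g1 om + g2 om + g3 om)%E by move=> om; apply: adde_ge0.
have s1234 : forall om, (0 <= g1 om + g2 om + g3 om + g4 om)%E by move=> om; apply: adde_ge0.
have X0 : forall om, setT om -> (0 <= (reg_risk f V c (fun i => z i om) Sn (wm om)
      - reg_risk f V c (fun i => z i om) Sn (wnstar om))%:E)%E.
  by move=> om _; rewrite lee_fin subr_ge0; exact: hwnstar.
have mXn : measurable_fun setT (fun om => (reg_risk f V c (fun i => z i om) Sn (wm om)
      - reg_risk f V c (fun i => z i om) Sn (wnstar om))%:E).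
  by apply/measurable_EFinP; exact: hmeas_n.
rewrite /expect.
apply: (le_trans (ge0_le_integral P measurableT X0 mXn m12345 (fun om _ => pw om))).
rewrite (ge0_integralD P measurableT (fun om _ => s1234 om) m1234 (fun om _ => g5_0 om) mg5).
rewrite (ge0_integralD P measurableT (fun om _ => s123 om) m123 (fun om _ => g4_0 om) mg4).
rewrite (ge0_integralD P measurableT (fun om _ => s12 om) m12 (fun om _ => g3_0 om) mg3).
rewrite (ge0_integralD P measurableT (fun om _ => g1_0 om) mg1 (fun om _ => g2_0 om) mg2).
have two_a0 : 0 <= 2 * a by rewrite mulr_ge0.
have two_e0 : 0 <= 2 * e by rewrite mulr_ge0.
rewrite /g2 /g3 /g4 /g5.
rewrite (ge0_integralZl_EFin P measurableT (fun om _ => D0 Sd om) mDd two_a0).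
rewrite (ge0_integralZl_EFin P measurableT (fun om _ => D0 Sm om) mDm two_a0).
rewrite (ge0_integralZl_EFin P measurableT (fun om _ => D0 Sn om) mDn two_e0).
rewrite integral_cst //.
rewrite [X in (_ + X <= _)%E](_ : _ = K%:E); last first.
  rewrite -[RHS]mule1; congr (_ * _)%E; exact: probability_setT.
apply: (@le_trans _ _ (delta_m + 2 * a * V (n - m)%N + 2 * a * V m + 2 * e * V n + K)%:E).
  rewrite !EFinD !EFinM; apply: leeD => //; apply: leeD; last exact: lee_wpmul2l.
  apply: leeD; last exact: lee_wpmul2l.
  apply: leeD; last exact: lee_wpmul2l.
  exact: hdelta.
rewrite lee_fin le_eqVlt; apply/orP; left; apply/eqP.
rewrite /a /e /K; field; rewrite pnatr_eq0 -lt0n n0 /=; exact: lt0r_neq0.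
Qed.
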